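(* Let $u_1\neq u_2$ be the roots of $B(u)$, $v_i=-A(u_i)=-q_1^2u_i-2q_1q_2$, and $w_i=v_i-\tfrac32(u_i^3-t_1u_i-t_3)$ for $i=1,2$. Put $$V_i=\tfrac13w_i^2-\frac{t_1t_2}{2}-\frac{3t_3^2}{4}-\tfrac32t_1t_3u_i-\tfrac34t_1^2u_i^2+t_2u_i^2+\tfrac32t_3u_i^3+\tfrac32t_1u_i^4-\tfrac34u_i^6 .$$ Then $(u_1,u_2,w_1,w_2)$ are canonical coordinates ($\{u_i,w_j\}=\delta_{ij}$, $\{u_1,u_2\}=\{w_1,w_2\}=0$), and the Hamiltonians take the St\''ackel form $$H_1=\frac{V_1-V_2}{u_1-u_2},\qquad H_2=\frac{u_2V_1-u_1V_2}{u_2-u_1}.$$ Equivalently, $w_i^2=\mathcal P(u_i)$ for $i=1,2$, where $$\mathcal P(u)=\frac94\Big(u^6-2t_1u^4-2t_3u^3+\big(t_1^2-\tfrac43t_2\big)u^2+2t_1t_3u+\tfrac23t_1t_2+t_3^2\Big)+3H_1u+3H_2 .$$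
   Context: $(q_1,q_2,p_1,p_2)$ carry the canonical bracket $\{q_i,p_j\}=\delta_{ij}$, $\{q_1,q_2\}=\{p_1,p_2\}=0$; $t_1,t_2,t_3$ are constants, $q_1\neq0$; $$B(u)=u^2-\frac{p_2-2q_2}{2q_1}u+\frac{q_1^2}{6}-\frac{t_1}{2}-\frac{p_1}{2q_1}+\frac{p_2^2/4-q_2^2+t_2}{2q_1^2},\qquad A(u)=q_1^2u+2q_1q_2,$$ $$H_1=\tfrac12p_1p_2-\frac{q_2}{4q_1}p_2^2+q_1^3q_2+\frac{q_2^3}{q_1}-t_1q_1q_2-\frac{t_2q_2}{q_1}-t_3q_1^2,$$ $$H_2=-\Big(\frac{p_2^2}{8q_1}+\frac{3t_2-3t_1q_1^2+q_1^4-3q_2^2}{6q_1}\Big)^2-\frac{t_1t_2}{2}+\frac14p_1^2-2t_3q_1q_2+\frac43q_1^2q_2^2 .$$ *)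

(* Defs.v *)
From Stdlib Require Import Reals.
From Coquelicot Require Import Coquelicot.
Open Scope R_scope.

(* A phase-space function of (q1, q2, p1, p2). *)
Definition fun4 := R -> R -> R -> R -> R.

Definition dq1 (f : fun4) a b c d := Derive (fun z => f z b c d) a.
Definition dq2 (f : fun4) a b c d := Derive (fun z => f a z c d) b.
Definition dp1 (f : fun4) a b c d := Derive (fun z => f a b z d) c.
Definition dp2 (f : fun4) a b c d := Derive (fun z => f a b c z) d.

Definition has_partials (f : fun4) a b c d : Prop :=
  ex_derive (fun z => f z b c d) a /\ ex_derive (fun z => f a z c d) b /\
  ex_derive (fun z => f a b z d) c /\ ex_derive (fun z => f a b c z) d.

Definition pb (f g : fun4) a b c d : R :=
  dq1 f a b c d * dp1 g a b c d - dp1 f a b c d * dq1 g a b c d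
  + dq2 f a b c d * dp2 g a b c d - dp2 f a b c d * dq2 g a b c d.

Definition open4 (U : R -> R -> R -> R -> Prop) : Prop :=
  forall a b c d, U a b c d -> exists e, 0 < e /\
    forall a' b' c' d', Rabs (a' - a) < e -> Rabs (b' - b) < e ->
      Rabs (c' - c) < e -> Rabs (d' - d) < e -> U a' b' c' d'.

Section Sys.
Variables t1 t2 t3 : R.

Definition Bpoly (q1 q2 p1 p2 u : R) : R :=
  u ^ 2 - (p2 - 2 * q2) / (2 * q1) * u + q1 ^ 2 / 6 - t1 / 2 - p1 / (2 * q1)
  + (p2 ^ 2 / 4 - q2 ^ 2 + t2) / (2 * q1 ^ 2).

Definition Apoly (q1 q2 u : R) : R := q1 ^ 2 * u + 2 * q1 * q2.

Definition H1 (q1 q2 p1 p2 : R) : R :=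
  / 2 * p1 * p2 - q2 / (4 * q1) * p2 ^ 2 + q1 ^ 3 * q2 + q2 ^ 3 / q1
  - t1 * q1 * q2 - t2 * q2 / q1 - t3 * q1 ^ 2.

Definition H2 (q1 q2 p1 p2 : R) : R :=
  - (p2 ^ 2 / (8 * q1) + (3 * t2 - 3 * t1 * q1 ^ 2 + q1 ^ 4 - 3 * q2 ^ 2) / (6 * q1)) ^ 2
  - t1 * t2 / 2 + / 4 * p1 ^ 2 - 2 * t3 * q1 * q2 + 4 / 3 * q1 ^ 2 * q2 ^ 2.

Definition wval (q1 q2 u : R) : R :=
  - Apoly q1 q2 u - 3 / 2 * (u ^ 3 - t1 * u - t3).

Definition wfun (u : fun4) : fun4 :=
  fun a b c d => wval a b (u a b c d).

Definition Vval (u w : R) : R :=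
  / 3 * w ^ 2 - t1 * t2 / 2 - 3 * t3 ^ 2 / 4 - 3 / 2 * t1 * t3 * u
  - 3 / 4 * t1 ^ 2 * u ^ 2 + t2 * u ^ 2 + 3 / 2 * t3 * u ^ 3
  + 3 / 2 * t1 * u ^ 4 - 3 / 4 * u ^ 6.

Definition Ppoly (h1 h2 u : R) : R :=
  9 / 4 * (u ^ 6 - 2 * t1 * u ^ 4 - 2 * t3 * u ^ 3 + (t1 ^ 2 - 4 / 3 * t2) * u ^ 2
           + 2 * t1 * t3 * u + 2 / 3 * t1 * t2 + t3 ^ 2)
  + 3 * h1 * u + 3 * h2.
End Sys.

(* Main.v *)
Require Import Defs.
From Stdlib Require Import Reals Lra.
From Coquelicot Require Import Coquelicot.
Open Scope R_scope.

Lemma solve_lin x k r e : e = x*k + r -> e = 0 -> k <> 0 -> x = - r / k.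
Proof.
  intros -> H Hk. apply (Rmult_eq_reg_r k); [|auto].
  unfold Rdiv. rewrite Rmult_assoc, Rinv_l by auto. lra.
Qed.

Lemma ballR (x y : R) (e : posreal) : ball x e y -> Rabs (y - x) < e.
Proof. intros H; exact H. Qed.

Lemma loc_zero (U : R -> R -> R -> R -> Prop) (P : R -> R -> R -> R -> Prop) a b c d :
  open4 U -> (forall a b c d, U a b c d -> P a b c d) -> U a b c d ->
  (locally a (fun z => P z b c d)) /\ (locally b (fun z => P a z c d)) /\
  (locally c (fun z => P a b z d)) /\ (locally d (fun z => P a b c z)).
Proof.
  intros HU HP Hx. destruct (HU a b c d Hx) as [e [He H]].
  assert (R0 : forall x, Rabs (x - x) < e) by (intros; rewrite Rminus_diag, Rabs_R0; auto).
  repeat split; exists (mkposreal e He); intros y Hy;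
  apply ballR in Hy; apply HP, H; auto.
Qed.

Section S.
Variables t1 t2 t3 : R.
Variable U : R -> R -> R -> R -> Prop.
Variable u : fun4.
Hypothesis HU : open4 U.
Hypothesis Hr : forall a b c d, U a b c d -> a <> 0 /\ Bpoly t1 t2 a b c d (u a b c d) = 0.

Lemma du_q1 a b c d : U a b c d -> ex_derive (fun z => u z b c d) a ->
  2 * u a b c d - (d - 2*b)/(2*a) <> 0 ->
  Derive (fun z => u z b c d) a =
   - ((d - 2*b)/(2*a^2) * u a b c d + a/3 + c/(2*a^2) - (d^2/4 - b^2 + t2)/a^3)
   / (2 * u a b c d - (d - 2*b)/(2*a)).
Proof.
  intros Hx Hd Hk. destruct (Hr _ _ _ _ Hx) as [Ha _].
  destruct (loc_zero U (fun a b c d => Bpoly t1 t2 a b c d (u a b c d) = 0) a b c d HU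
    (fun a b c d h => proj2 (Hr a b c d h)) Hx) as [L _].
  assert (D0 : is_derive (fun z => Bpoly t1 t2 z b c d (u z b c d)) a 0).
  { apply is_derive_ext_loc with (fun _ => 0).
    - eapply filter_imp; [|exact L]. simpl. intros; auto.
    - auto_derive; auto. }
  eassert (D1 : is_derive (fun z => Bpoly t1 t2 z b c d (u z b c d)) a _).
  { unfold Bpoly. auto_derive. 2: reflexivity. repeat split; auto; 
    try (apply Rmult_integral_contrapositive; split; auto; lra). }
  pose proof (is_derive_unique _ _ _ D0) as E0.
  rewrite (is_derive_unique _ _ _ D1) in E0.
  eapply solve_lin; [|exact E0|exact Hk]. field. auto.
Qed.
Lemma du_q2 a b c d : U a b c d -> ex_derive (fun z => u a z c d) b ->
  2 * u a b c d - (d - 2*b)/(2*a) <> 0 ->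
  Derive (fun z => u a z c d) b =
   - (u a b c d/a - b/a^2)
   / (2 * u a b c d - (d - 2*b)/(2*a)).
Proof.
  intros Hx Hd Hk. destruct (Hr _ _ _ _ Hx) as [Ha _].
  destruct (loc_zero U (fun a b c d => Bpoly t1 t2 a b c d (u a b c d) = 0) a b c d HU
    (fun a b c d h => proj2 (Hr a b c d h)) Hx) as [_ [L _]].
  assert (D0 : is_derive (fun z => Bpoly t1 t2 a z c d (u a z c d)) b 0).
  { apply is_derive_ext_loc with (fun _ => 0).
    - eapply filter_imp; [|exact L]. simpl. intros; auto.
    - auto_derive; auto. }
  eassert (D1 : is_derive (fun z => Bpoly t1 t2 a z c d (u a z c d)) b _).
  { unfold Bpoly. auto_derive. 2: reflexivity. repeat split; auto; 
    try (apply Rmult_integral_contrapositive; split; auto; lra). }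
  pose proof (is_derive_unique _ _ _ D0) as E0.
  rewrite (is_derive_unique _ _ _ D1) in E0.
  eapply solve_lin; [|exact E0|exact Hk]. field. auto.
Qed.
Lemma du_p1 a b c d : U a b c d -> ex_derive (fun z => u a b z d) c ->
  2 * u a b c d - (d - 2*b)/(2*a) <> 0 ->
  Derive (fun z => u a b z d) c =
   - (-1/(2*a))
   / (2 * u a b c d - (d - 2*b)/(2*a)).
Proof.
  intros Hx Hd Hk. destruct (Hr _ _ _ _ Hx) as [Ha _].
  destruct (loc_zero U (fun a b c d => Bpoly t1 t2 a b c d (u a b c d) = 0) a b c d HU
    (fun a b c d h => proj2 (Hr a b c d h)) Hx) as [_ [_ [L _]]].
  assert (D0 : is_derive (fun z => Bpoly t1 t2 a b z d (u a b z d)) c 0).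
  { apply is_derive_ext_loc with (fun _ => 0).
    - eapply filter_imp; [|exact L]. simpl. intros; auto.
    - auto_derive; auto. }
  eassert (D1 : is_derive (fun z => Bpoly t1 t2 a b z d (u a b z d)) c _).
  { unfold Bpoly. auto_derive. 2: reflexivity. repeat split; auto; 
    try (apply Rmult_integral_contrapositive; split; auto; lra). }
  pose proof (is_derive_unique _ _ _ D0) as E0.
  rewrite (is_derive_unique _ _ _ D1) in E0.
  eapply solve_lin; [|exact E0|exact Hk]. field. auto.
Qed.
Lemma du_p2 a b c d : U a b c d -> ex_derive (fun z => u a b c z) d ->
  2 * u a b c d - (d - 2*b)/(2*a) <> 0 ->
  Derive (fun z => u a b c z) d =
   - (- u a b c d/(2*a) + d/(4*a^2))
   / (2 * u a b c d - (d - 2*b)/(2*a)).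
Proof.
  intros Hx Hd Hk. destruct (Hr _ _ _ _ Hx) as [Ha _].
  destruct (loc_zero U (fun a b c d => Bpoly t1 t2 a b c d (u a b c d) = 0) a b c d HU
    (fun a b c d h => proj2 (Hr a b c d h)) Hx) as [_ [_ [_ L]]].
  assert (D0 : is_derive (fun z => Bpoly t1 t2 a b c z (u a b c z)) d 0).
  { apply is_derive_ext_loc with (fun _ => 0).
    - eapply filter_imp; [|exact L]. simpl. intros; auto.
    - auto_derive; auto. }
  eassert (D1 : is_derive (fun z => Bpoly t1 t2 a b c z (u a b c z)) d _).
  { unfold Bpoly. auto_derive. 2: reflexivity. repeat split; auto; 
    try (apply Rmult_integral_contrapositive; split; auto; lra). }
  pose proof (is_derive_unique _ _ _ D0) as E0.
  rewrite (is_derive_unique _ _ _ D1) in E0.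
  eapply solve_lin; [|exact E0|exact Hk]. field. auto.
Qed.

Definition wu (a x : R) := - a^2 - 3/2 * (3 * x^2 - t1).
Lemma dw_q1 a b c d : ex_derive (fun z => u z b c d) a ->
  Derive (fun z => wfun t1 t3 u z b c d) a = -(2*a*u a b c d + 2*b) + wu a (u a b c d) * Derive (fun z => u z b c d) a.
Proof. intros H. apply is_derive_unique. unfold wfun, wval, Apoly, wu. auto_derive; auto. ring. Qed.
Lemma dw_q2 a b c d : ex_derive (fun z => u a z c d) b ->
  Derive (fun z => wfun t1 t3 u a z c d) b = -(2*a) + wu a (u a b c d) * Derive (fun z => u a z c d) b.
Proof. intros H. apply is_derive_unique. unfold wfun, wval, Apoly, wu. auto_derive; auto. ring. Qed.
Lemma dw_p1 a b c d : ex_derive (fun z => u a b z d) c ->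
  Derive (fun z => wfun t1 t3 u a b z d) c = wu a (u a b c d) * Derive (fun z => u a b z d) c.
Proof. intros H. apply is_derive_unique. unfold wfun, wval, Apoly, wu. auto_derive; auto. ring. Qed.
Lemma dw_p2 a b c d : ex_derive (fun z => u a b c z) d ->
  Derive (fun z => wfun t1 t3 u a b c z) d = wu a (u a b c d) * Derive (fun z => u a b c z) d.
Proof. intros H. apply is_derive_unique. unfold wfun, wval, Apoly, wu. auto_derive; auto. ring. Qed.
End S.

Theorem mainTheorem9 (t1 t2 t3 : R) (U : R -> R -> R -> R -> Prop) (u1 u2 : fun4) :
  open4 U ->
  (forall a b c d, U a b c d ->
     a <> 0 /\ Bpoly t1 t2 a b c d (u1 a b c d) = 0 /\
     Bpoly t1 t2 a b c d (u2 a b c d) = 0 /\ u1 a b c d <> u2 a b c d) ->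
  forall q1 q2 p1 p2, U q1 q2 p1 p2 ->
  has_partials u1 q1 q2 p1 p2 -> has_partials u2 q1 q2 p1 p2 ->
  let w1 := wfun t1 t3 u1 in
  let w2 := wfun t1 t3 u2 in
  let x1 := u1 q1 q2 p1 p2 in
  let x2 := u2 q1 q2 p1 p2 in
  let y1 := w1 q1 q2 p1 p2 in
  let y2 := w2 q1 q2 p1 p2 in
  let V1 := Vval t1 t2 t3 x1 y1 in
  let V2 := Vval t1 t2 t3 x2 y2 in
  let h1 := H1 t1 t2 t3 q1 q2 p1 p2 in
  let h2 := H2 t1 t2 t3 q1 q2 p1 p2 in
  pb u1 w1 q1 q2 p1 p2 = 1 /\ pb u1 w2 q1 q2 p1 p2 = 0 /\
  pb u2 w1 q1 q2 p1 p2 = 0 /\ pb u2 w2 q1 q2 p1 p2 = 1 /\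
  pb u1 u2 q1 q2 p1 p2 = 0 /\ pb w1 w2 q1 q2 p1 p2 = 0 /\
  h1 = (V1 - V2) / (x1 - x2) /\
  h2 = (x2 * V1 - x1 * V2) / (x2 - x1) /\
  y1 ^ 2 = Ppoly t1 t2 t3 h1 h2 x1 /\
  y2 ^ 2 = Ppoly t1 t2 t3 h1 h2 x2.
Proof.
  intros HU Hr q1 q2 p1 p2 Hx P1 P2. cbv zeta.
  assert (Hr1 : forall a b c d, U a b c d -> a <> 0 /\ Bpoly t1 t2 a b c d (u1 a b c d) = 0)
    by (intros a b c d h; destruct (Hr a b c d h) as [? [? [? ?]]]; auto).
  assert (Hr2 : forall a b c d, U a b c d -> a <> 0 /\ Bpoly t1 t2 a b c d (u2 a b c d) = 0)
    by (intros a b c d h; destruct (Hr a b c d h) as [? [? [? ?]]]; auto).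
  destruct (Hr _ _ _ _ Hx) as [Ha [B1 [B2 Hne]]].
  assert (Hne' : u1 q1 q2 p1 p2 - u2 q1 q2 p1 p2 <> 0) by (intro; apply Hne; lra).
  assert (hs : (p2 - 2*q2)/(2*q1) = u1 q1 q2 p1 p2 + u2 q1 q2 p1 p2).
  { assert (E : (u1 q1 q2 p1 p2 - u2 q1 q2 p1 p2) * (u1 q1 q2 p1 p2 + u2 q1 q2 p1 p2 - (p2-2*q2)/(2*q1))
       = Bpoly t1 t2 q1 q2 p1 p2 (u1 q1 q2 p1 p2) - Bpoly t1 t2 q1 q2 p1 p2 (u2 q1 q2 p1 p2))
      by (unfold Bpoly; ring).
    rewrite B1, B2, Rminus_0_r in E. apply Rmult_integral in E. destruct E; [contradiction|lra]. }
  assert (K1 : 2 * u1 q1 q2 p1 p2 - (p2 - 2*q2)/(2*q1) <> 0) by (rewrite hs; intro; apply Hne'; lra).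
  assert (K2 : 2 * u2 q1 q2 p1 p2 - (p2 - 2*q2)/(2*q1) <> 0) by (rewrite hs; intro; apply Hne'; lra).
  destruct P1 as [D1a [D1b [D1c D1d]]]. destruct P2 as [D2a [D2b [D2c D2d]]].
  unfold pb, dq1, dq2, dp1, dp2.
  rewrite !dw_q1, !dw_q2, !dw_p1, !dw_p2 by assumption.
  rewrite (du_q1 t1 t2 U u1 HU Hr1 q1 q2 p1 p2 Hx D1a K1).
  rewrite (du_q2 t1 t2 U u1 HU Hr1 q1 q2 p1 p2 Hx D1b K1).
  rewrite (du_p1 t1 t2 U u1 HU Hr1 q1 q2 p1 p2 Hx D1c K1).
  rewrite (du_p2 t1 t2 U u1 HU Hr1 q1 q2 p1 p2 Hx D1d K1).
  rewrite (du_q1 t1 t2 U u2 HU Hr2 q1 q2 p1 p2 Hx D2a K2).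
  rewrite (du_q2 t1 t2 U u2 HU Hr2 q1 q2 p1 p2 Hx D2b K2).
  rewrite (du_p1 t1 t2 U u2 HU Hr2 q1 q2 p1 p2 Hx D2c K2).
  rewrite (du_p2 t1 t2 U u2 HU Hr2 q1 q2 p1 p2 Hx D2d K2).
  rewrite hs.
  unfold wfun, H1, H2, Vval, Ppoly, wval, wu, Apoly.
  unfold Bpoly in B1. rewrite hs in B1.
  set (X1 := u1 q1 q2 p1 p2) in *. set (X2 := u2 q1 q2 p1 p2) in *.
  clearbody X1 X2. clear - Ha Hne' hs B1.
  assert (E2 : p2 = 2*q1*(X1+X2) + 2*q2).
  { assert (p2 - (2*q1*(X1+X2) + 2*q2) = 2*q1*((p2-2*q2)/(2*q1) - (X1+X2))) by (field; auto).
    rewrite hs in H. lra. }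
  assert (E1 : p1 = 2*q1*(q1^2/6 - t1/2 + (p2^2/4 - q2^2 + t2)/(2*q1^2) - X1*X2)).
  { match type of B1 with ?L = 0 =>
      assert (2*q1*(q1^2/6 - t1/2 + (p2^2/4 - q2^2 + t2)/(2*q1^2) - X1*X2) - p1 = 2*q1*L) by (field; auto) end.
    rewrite B1 in H. lra. }
  clear hs B1. subst p1. subst p2.
  assert (N1 : 2 * X1 - (X1 + X2) <> 0) by (intro; apply Hne'; lra).
  assert (N2 : 2 * X2 - (X1 + X2) <> 0) by (intro; apply Hne'; lra).
  assert (N3 : X2 - X1 <> 0) by (intro; apply Hne'; lra).
  repeat split; field; auto.
Qed.
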